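(* Let $f:\mathbb{R}^d\to\mathbb{R}$ be convex and $L$-smooth (differentiable with $\|\nabla f(x)-\nabla f(y)\|\le L\|x-y\|$), and let $x_*$ be a minimizer of $f$. Consider the iterate-averaging form of Nesterov's method: $z_0=x_0\in\mathbb{R}^d$ and for $k\ge 0$ $$y_k=(1-c_{k+1})x_k+c_{k+1}z_k,\qquad z_{k+1}=z_k-\rho_k\nabla f(y_k),\qquad x_{k+1}=(1-c_{k+1})x_k+c_{k+1}z_{k+1},$$ with $c_{k+1}=\frac{2}{k+2}$ and $\rho_k=\frac{k+1}{2L}$. Then for every $n\ge 1$, $$f(x_n)-f(x_* )\le\frac{2L}{n^{\overline{2}}}\|x_0-x_*\|^2,$$ where $n^{\overline 2}=n(n+1)$. *)

(* Defs.v *)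
From HB Require Import structures.
From mathcomp Require Import all_boot all_order all_algebra.
From mathcomp Require Import all_classical all_reals all_analysis.
Set Implicit Arguments. Unset Strict Implicit. Unset Printing Implicit Defensive.
Import Order.TTheory GRing.Theory Num.Theory.
Import numFieldNormedType.Exports.
Local Open Scope ring_scope.

(* Euclidean inner product and norm on R^d (the library's norm on 'rV is the sup norm). *)
Definition dotv {R : realType} {d : nat} (u v : 'rV[R]_d) : R :=
  \sum_(i < d) u ord0 i * v ord0 i.
Definition enorm {R : realType} {d : nat} (v : 'rV[R]_d) : R := Num.sqrt (dotv v v).

(* Gradient: the row of partial derivatives (directional derivatives along the
   standard basis vectors); for a differentiable f this is the gradient. *)
Definition grad {R : realType} {d : nat} (f : 'rV[R]_d -> R) (x : 'rV[R]_d) : 'rV[R]_d :=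
  \row_(i < d) ('D_(delta_mx ord0 i) f x).

Definition convex_fun {R : realType} {d : nat} (f : 'rV[R]_d -> R) : Prop :=
  forall (x y : 'rV[R]_d) (t : R), 0 <= t -> t <= 1 ->
    f ((1 - t) *: x + t *: y) <= (1 - t) * f x + t * f y.

Definition L_smooth {R : realType} {d : nat} (L : R) (f : 'rV[R]_d -> R) : Prop :=
  (forall x, differentiable f x) /\
  (forall x y, enorm (grad f x - grad f y) <= L * enorm (x - y)).

Definition c_coef {R : realType} (k : nat) : R := 2 / (k%:R + 2).      (* c_{k+1} *)
Definition rho {R : realType} (L : R) (k : nat) : R := (k%:R + 1) / (2 * L).

Fixpoint nesterov {R : realType} {d : nat} (f : 'rV[R]_d -> R) (L : R)
    (x0 : 'rV[R]_d) (k : nat) : 'rV[R]_d * 'rV[R]_d :=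
  match k with
  | 0%N => (x0, x0)
  | k'.+1 =>
      let: (x, z) := nesterov f L x0 k' in
      let c := c_coef k' in
      let y := (1 - c) *: x + c *: z in
      let z' := z - rho L k' *: grad f y in
      ((1 - c) *: x + c *: z', z')
  end.

(* Main.v *)
From HB Require Import structures.
From mathcomp Require Import all_boot all_order all_algebra.
From mathcomp Require Import all_classical all_reals all_analysis.
Require Import Defs.
From mathcomp Require Import ring lra.
Import Order.TTheory GRing.Theory Num.Theory.
Import numFieldNormedType.Exports.
Local Open Scope ring_scope.

Section Aux.
Local Open Scope classical_set_scope.
Section Dot.
Context {R : realType} {d : nat}.
Implicit Types u v w : 'rV[R]_d.
Lemma dotvC u v : dotv u v = dotv v u.
Proof. by apply: eq_bigr => i _; rewrite mulrC. Qed.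
Lemma dotvDl u v w : dotv (u + v) w = dotv u w + dotv v w.
Proof. by rewrite /dotv -big_split; apply: eq_bigr => i _; rewrite mxE mulrDl. Qed.
Lemma dotvZl a u w : dotv (a *: u) w = a * dotv u w.
Proof. by rewrite /dotv mulr_sumr; apply: eq_bigr => i _; rewrite mxE mulrA. Qed.
Lemma dotvNl u w : dotv (- u) w = - dotv u w.
Proof. by rewrite -scaleN1r dotvZl mulN1r. Qed.
Lemma dotvBl u v w : dotv (u - v) w = dotv u w - dotv v w.
Proof. by rewrite dotvDl dotvNl. Qed.
Lemma dotvDr u v w : dotv w (u + v) = dotv w u + dotv w v.
Proof. by rewrite dotvC dotvDl !(dotvC w). Qed.
Lemma dotvZr a u w : dotv w (a *: u) = a * dotv w u.
Proof. by rewrite dotvC dotvZl dotvC. Qed.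
Lemma dotvNr u w : dotv w (- u) = - dotv w u.
Proof. by rewrite dotvC dotvNl dotvC. Qed.
Lemma dotvBr u v w : dotv w (u - v) = dotv w u - dotv w v.
Proof. by rewrite dotvDr dotvNr. Qed.
Lemma dotv_ge0 u : 0 <= dotv u u.
Proof. by apply: sumr_ge0 => i _; rewrite -expr2 sqr_ge0. Qed.
Lemma enorm_sq u : enorm u ^+ 2 = dotv u u.
Proof. by rewrite sqr_sqrtr // dotv_ge0. Qed.
Lemma enorm_ge0 u : 0 <= enorm u.
Proof. exact: sqrtr_ge0. Qed.
Lemma enormZ a u : enorm (a *: u) = `|a| * enorm u.
Proof. by rewrite /enorm dotvZl dotvZr mulrA -expr2 sqrtrM ?sqr_ge0 // sqrtr_sqr. Qed.
Lemma dotv_eq0 u : dotv u u = 0 -> forall w, dotv u w = 0.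
Proof.
move=> /eqP; rewrite psumr_eq0; last by move=> i _; rewrite -expr2 sqr_ge0.
move=> /allP H w; apply: big1 => i _.
have : u ord0 i * u ord0 i == 0 by apply: H; rewrite mem_index_enum.
by rewrite mulf_eq0 orbb => /eqP ->; rewrite mul0r.
Qed.
Lemma cauchy_schwarz u w : dotv u w <= enorm u * enorm w.
Proof.
have [u0|] := eqVneq (dotv u u) 0.
  by rewrite dotv_eq0 // mulr_ge0 // enorm_ge0.
move=> un0.
have [w0|wn0] := eqVneq (dotv w w) 0.
  by rewrite dotvC dotv_eq0 // mulr_ge0 // enorm_ge0.
have nu : 0 < enorm u by rewrite sqrtr_gt0 lt_def un0 dotv_ge0.
have nw : 0 < enorm w by rewrite sqrtr_gt0 lt_def wn0 dotv_ge0.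
have := dotv_ge0 (enorm w *: u - enorm u *: w).
rewrite !(dotvBl, dotvBr, dotvZl, dotvZr) -!enorm_sq (dotvC w u) => H.
have : 0 <= enorm u * enorm w * (2 * (enorm u * enorm w - dotv u w)) by lra.
by rewrite pmulr_rge0 ?mulr_gt0 // pmulr_rge0 // subr_ge0.
Qed.
End Dot.
Lemma grad_dot (R : realType) (d : nat) (f : 'rV[R]_d -> R) x w :
  differentiable f x -> dotv (grad f x) w = 'D_w f x.
Proof.
move=> df; rewrite deriveE //.
rewrite {2}(matrix_sum_delta w) big_ord1 linear_sum /dotv.
apply: eq_bigr => i _; rewrite mxE deriveE // linearZ /= mulrC.
by rewrite [ord0]ord1.
Qed.
Lemma line_derive (R : realType) (d : nat) (f : 'rV[R]_d -> R) x w s :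
  differentiable f (x + s *: w) ->
  is_derive s 1 (fun t : R => f (x + t *: w)) ('D_w f (x + s *: w)).
Proof.
move=> df.
have E : (fun h : R => h^-1 *: (((fun t : R => f (x + t *: w)) \o shift s) (h *: 1) - f (x + s *: w)))
  = (fun h : R => h^-1 *: ((f \o shift (x + s *: w)) (h *: w) - f (x + s *: w))).
  apply/funext => h /=.
  by rewrite [_%:A]mulr1 scalerDl addrCA addrC.
apply: DeriveDef; first by rewrite /derivable E; exact: diff_derivable.
by rewrite /derive E.
Qed.
Lemma poly_der (R : realType) (a c t : R) :
  is_derive t 1 (a \*: (@id R) + c \*: ((@id R) * (@id R)) : R -> R) (a + 2 * c * t).
Proof.
apply: is_derive_eq.
by rewrite ![_%:A]mulr1 -[c *: _]/(c * _); ring.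
Qed.
Lemma descent (R : realType) (d : nat) (f : 'rV[R]_d -> R) (L : R) x w :
  0 < L -> L_smooth L f ->
  f (x + w) <= f x + dotv (grad f x) w + L / 2 * dotv w w.
Proof.
move=> L0 [dif lip].
set D0 := dotv (grad f x) w; set c := L / 2 * dotv w w.
pose psi := ((fun t : R => f (x + t *: w)) - (D0 \*: (@id R) + c \*: ((@id R) * (@id R)))) : R -> R.
have dpsi (t : R) : is_derive t (1 : R) psi ('D_w f (x + t *: w) - (D0 + 2 * c * t)).
  by apply: is_deriveB; [exact: line_derive | exact: poly_der].
have cpsi : {within `[0, 1], continuous psi}.
  apply: derivable_within_continuous => t _; exact: (@ex_derive _ _ _ _ _ _ _ (dpsi t)).
have [t t01 E] := MVT ltr01 (fun t _ => dpsi t) cpsi.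
move: E; rewrite /psi !fctE /= scale1r scale0r addr0 [_%:A]mulr1 -![c *: _]/(c * _) -[D0 *: _]/(D0 * _) !mulr0 !mulr1 !addr0 !subr0.

rewrite -grad_dot // -/D0 => E.
have : dotv (grad f (x + t *: w)) w - (D0 + 2 * c * t) <= 0.
  rewrite /D0 opprD addrA -dotvBl.
  have t0 : 0 < t by move: t01; rewrite in_itv /= => /andP[].
  rewrite subr_le0.
  apply: le_trans (cauchy_schwarz _ _) _.
  apply: le_trans (ler_wpM2r (enorm_ge0 _) (lip _ _)) _.
  have -> : x + t *: w - x = t *: w by rewrite addrC addKr.
  rewrite enormZ gtr0_norm // /c -enorm_sq.
  by rewrite le_eqVlt; apply/orP; left; apply/eqP; field.
lra.
Qed.
Lemma right_dnbhs (R : realType) : (0:R)^'+ `=>` (0:R)^'.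
Proof.
move=> A; rewrite /at_right /dnbhs /within /=.
by apply: filterS => t H /lt0r_neq0; apply: H.
Qed.

Lemma convex_deriv (R : realType) (d : nat) (f : 'rV[R]_d -> R) x y :
  convex_fun f -> derivable f x (y - x) -> 'D_(y - x) f x <= f y - f x.
Proof.
move=> cf df.
have cv : (fun h : R => h^-1 *: ((f \o shift x) (h *: (y - x)) - f x)) @ 0^'+ --> 'D_(y - x) f x.
  by apply: cvg_trans df; apply: cvg_app; exact: right_dnbhs.
apply: (cvgr_to_le cv).
near=> h.
have h0 : 0 < h by near: h; exact: nbhs_right_gt.
have h1 : h <= 1 by near: h; exact: nbhs_right_le.
rewrite /= -[h^-1 *: _]/(h^-1 * _) ler_pdivrMl //.
have := cf x y h (ltW h0) h1.
have -> : (1 - h) *: x + h *: y = h *: (y - x) + x.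
  by rewrite scalerBl scale1r scalerBr addrAC [in RHS]addrAC [x + _]addrC.
lra.
Unshelve. all: by end_near.
Qed.
Lemma scal (R : realType) (K L fy fx fx1 fs G P Q V V1 : R) : 0 <= K -> 0 < L -> 0 <= G ->
 fx1 <= fy + (- (2 / (K + 2) * ((K + 1) / (2 * L))) * G)
          + L / 2 * ((2 / (K + 2) * ((K + 1) / (2 * L))) ^+ 2 * G) ->
 2 / (K + 2) * (P - Q) <= fx - fy ->
 - ((1 - 2 / (K + 2)) * P + 2 / (K + 2) * Q) <= fs - fy ->
 V1 = V - 2 * ((K + 1) / (2 * L)) * Q + ((K + 1) / (2 * L)) ^+ 2 * G ->
 (K + 1) * (K + 1 + 1) * (fx1 - fs) + 2 * L * V1 <= K * (K + 1) * (fx - fs) + 2 * L * V.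
Proof.
move=> K0 L0 G0 h1 h2 h3 ->.
pose s1 := (fy + (- (2 / (K + 2) * ((K + 1) / (2 * L))) * G)
          + L / 2 * ((2 / (K + 2) * ((K + 1) / (2 * L))) ^+ 2 * G)) - fx1.
pose s2 := fx - fy - 2 / (K + 2) * (P - Q).
pose s3 := fs - fy + ((1 - 2 / (K + 2)) * P + 2 / (K + 2) * Q).
have e1 : fx1 = (fy + (- (2 / (K + 2) * ((K + 1) / (2 * L))) * G)
          + L / 2 * ((2 / (K + 2) * ((K + 1) / (2 * L))) ^+ 2 * G)) - s1 by rewrite /s1; ring.
have e2 : fx = fy + 2 / (K + 2) * (P - Q) + s2 by rewrite /s2; ring.
have e3 : fs = fy - ((1 - 2 / (K + 2)) * P + 2 / (K + 2) * Q) + s3 by rewrite /s3; ring.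
have p1 : 0 <= s1 by rewrite subr_ge0.
have p2 : 0 <= s2 by rewrite /s2 subr_ge0.
have p3 : 0 <= s3 by rewrite /s3; lra.
rewrite -subr_ge0.
have K2 : K + 2 != 0 by apply/lt0r_neq0; lra.
have L2 : L != 0 by apply/lt0r_neq0.
have -> : K * (K + 1) * (fx - fs) + 2 * L * V -
  ((K + 1) * (K + 1 + 1) * (fx1 - fs) + 2 * L * (V - 2 * ((K + 1) / (2 * L)) * Q + ((K + 1) / (2 * L)) ^+ 2 * G))
  = (K + 1) * (K + 2) * s1 + K * (K + 1) * s2 + 2 * (K + 1) * s3 + (K + 1) ^+ 2 / (2 * L * (K + 2)) * G.
  rewrite e1 e2 e3. field. by rewrite K2 L2.
have K1 : 0 <= K + 1 by lra.
have K2' : 0 <= K + 2 by lra.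
have t1 : 0 <= (K + 1) * (K + 2) * s1 by rewrite !mulr_ge0.
have t2 : 0 <= K * (K + 1) * s2 by rewrite !mulr_ge0.
have t3 : 0 <= 2 * (K + 1) * s3 by rewrite !mulr_ge0.
have t4 : 0 <= (K + 1) ^+ 2 / (2 * L * (K + 2)) * G.
  by rewrite mulr_ge0 // divr_ge0 ?sqr_ge0 // !mulr_ge0 // ltW.
lra.
Qed.
End Aux.

Theorem theorem5 (R : realType) (d : nat) (f : 'rV[R]_d -> R) (L : R)
  (x0 xs : 'rV[R]_d) :
  0 < L -> convex_fun f -> L_smooth L f ->
  (forall x, f xs <= f x) ->
  forall n : nat, (1 <= n)%N ->
    f (nesterov f L x0 n).1 - f xs <= 2 * L / (n%:R * (n%:R + 1)) * enorm (x0 - xs) ^+ 2.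
Proof.
move=> L0 cf [dif lip] hmin n n1.
have step : forall k x z,
  let c := c_coef k in let y := (1 - c) *: x + c *: z in
  let z' := z - rho L k *: grad f y in
  ((k.+1)%:R * ((k.+1)%:R + 1)) * (f ((1 - c) *: x + c *: z') - f xs)
    + 2 * L * dotv (z' - xs) (z' - xs)
  <= (k%:R * (k%:R + 1)) * (f x - f xs) + 2 * L * dotv (z - xs) (z - xs).
  move=> k x z c y z'.
  set g := grad f y; set a := rho L k.
  have hx' : (1 - c) *: x + c *: z' = y + (- (c * a)) *: g.
    by apply/rowP => i; rewrite /z' /y /a /g !mxE; ring.
  have D := @descent R d f L y (- (c * a) *: g) L0 (conj dif lip).
  rewrite -hx' -/g !(dotvZl, dotvZr) in D.
  have C1 := @convex_deriv R d f y x cf (@diff_derivable _ _ _ _ _ _ (dif y)).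
  rewrite -grad_dot // -/g in C1.
  have ex : x - y = c *: ((x - xs) - (z - xs)).
    by apply/rowP => i; rewrite /y !mxE; ring.
  rewrite ex dotvZr dotvBr in C1.
  have C2 := @convex_deriv R d f y xs cf (@diff_derivable _ _ _ _ _ _ (dif y)).
  rewrite -grad_dot // -/g in C2.
  have es : xs - y = - ((1 - c) *: (x - xs) + c *: (z - xs)).
    by apply/rowP => i; rewrite /y !mxE; ring.
  rewrite es dotvNr dotvDr !dotvZr in C2.
  have ez : z' - xs = (z - xs) - a *: g.
    by apply/rowP => i; rewrite /z' /a /g !mxE; ring.
  have V1 : dotv (z' - xs) (z' - xs) = dotv (z - xs) (z - xs) - 2 * a * dotv g (z - xs)
      + a ^+ 2 * dotv g g.
    rewrite ez !(dotvBl, dotvBr, dotvZl, dotvZr) (dotvC z g) (dotvC xs g); ring.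
  rewrite -[k.+1]addn1 natrD.
  move: D C1 C2 V1; rewrite /c /a /c_coef /rho => D C1 C2 V1.
  apply: (@scal R k%:R L (f y) (f x) _ (f xs) (dotv g g) (dotv g (x - xs))
    (dotv g (z - xs)) (dotv (z - xs) (z - xs)) _ (ler0n _ _) L0 (dotv_ge0 g)) => //.
  apply: (le_trans D); rewrite le_eqVlt; apply/orP; left; apply/eqP; ring.
have main : forall k, (k%:R * (k%:R + 1)) * (f (nesterov f L x0 k).1 - f xs)
   + 2 * L * dotv ((nesterov f L x0 k).2 - xs) ((nesterov f L x0 k).2 - xs)
   <= 2 * L * dotv (x0 - xs) (x0 - xs).
  elim => [|k IH]; first by rewrite /= !mul0r add0r.
  move: IH; rewrite /=; case: (nesterov f L x0 k) => x z /= IH.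
  exact: le_trans (step k x z) IH.
have M := main n.
have V0 := dotv_ge0 ((nesterov f L x0 n).2 - xs).
have nn : 0 < n%:R * (n%:R + 1) :> R.
  by rewrite mulr_gt0 // ?ltr0n // ltr_wpDl // ler0n.
rewrite enorm_sq mulrAC ler_pdivlMr //.
nra.
Qed.
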